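(* Let $\widehat G$ be a signed ribbon graph and let $L=L_{\widehat G}\subset G\times I$ be the corresponding signed medial link, with diagram $\widetilde L=\widetilde L_{\widehat G}$, endowed with an orientation. Then $$J_L(t)=(-1)^{w(\widetilde L)}\,t^{\frac{3w(\widetilde L)-r(\widehat G)+n(\widehat G)}{4}}\,\bigl(-t^{1/2}-t^{-1/2}\bigr)^{k(\widehat G)-1}\,R_{\widehat G}\Bigl(-t-1,\,-t^{-1}-1,\,\frac{1}{-t^{1/2}-t^{-1/2}}\Bigr).$$ In particular, if $\widehat G$ is a planar ribbon graph (its surface has genus zero) with only positive edges and with underlying abstract graph $\Gamma$, then $$J_L(t)=(-1)^{w(\widetilde L)}\,t^{\frac{3w(\widetilde L)-r(\widehat G)+n(\widehat G)}{4}}\,\bigl(-t^{1/2}-t^{-1/2}\bigr)^{k(\widehat G)-1}\,T_\Gamma(-t,-t^{-1}),$$ where $T_\Gamma$ is the classical Tutte polynomial of $\Gamma$.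
   Context: A ribbon graph $G$ is a graph $\Gamma=(V,E)$ (loops and multiple edges allowed) with a fixed cyclic order of edge-ends at each vertex; equivalently a compact surface with boundary that is a union of closed vertex discs and edge ribbons meeting in disjoint line segments, each segment on the boundary of exactly one vertex disc and one edge ribbon, each ribbon containing exactly two segments. The surface $G$ is oriented (counterclockwise rotation). For a ribbon graph $F$: $v(F),e(F),k(F)$ are the numbers of vertices, edges, connected components; $r(F)=v(F)-k(F)$, $n(F)=e(F)-r(F)$; $\mathrm{bc}(F)$ is the number of boundary components of the surface $F$. A spanning subgraph contains all vertices and a subset of edges; $\mathcal F(G)$ is the set of them; $\overline F=G-F$ is the complementary spanning subgraph. A signed ribbon graph $\widehat G$ is $G$ with a sign function $\varepsilon:E\to\{\pm1\}$; $r(\widehat G),n(\widehat G),k(\widehat G)$ mean those of $G$; $e_-(F)$ is the number of edges of $F$ with sign $-1$, and $s(F)=\tfrac12\bigl(e_-(F)-e_-(\overline F)\bigr)$. The signed Bollobás–Riordan polynomial is $$R_{\widehat G}(x,y,z)=\sum_{F\in\mathcal F(G)}x^{r(G)-r(F)+s(F)}\,y^{n(F)-s(F)}\,z^{k(F)-\mathrm{bc}(F)+n(F)}.$$ Diagrams and Kauffman bracket: for a link in $G\times I$ ($I=[0,1]$) in general position w.r.t. projection to $G$, a diagram is its projected immersed curve with over/under information at finitely many double points. At a crossing the $A$-splitting joins the two local regions swept by the overcrossing arc rotated according to the orientation of $G$ until it reaches the undercrossing arc; the $B$-splitting joins the other two. A state $S$ chooses a splitting at each crossing; $\alpha(S),\beta(S)$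 count $A$- and $B$-splittings, $\delta(S)$ counts components of the resulting curve. $\langle\widetilde L\rangle(A,B,d)=\sum_S A^{\alpha(S)}B^{\beta(S)}d^{\delta(S)-1}$. Medial links: the medial graph $H_G$ in $G$ has one 4-valent vertex at the middle of each edge ribbon, its edges running along the ribbons and turning at vertex discs to the next ribbon in the cyclic order. Regions of $G\setminus H_G$ containing a vertex of $\Gamma$ are black, others white. The natural diagram $\widetilde L_G$ makes each vertex of $H_G$ a crossing so that the overcrossing branch, rotated according to the orientation of $G$ until the undercrossing branch, sweeps out the black regions. The signed medial link diagram $\widetilde L_{\widehat G}$ is obtained from $\widetilde L_G$ by switching overcrossing and undercrossing at crossings of negative edges. Jones polynomial: for an oriented link $L$ with diagram $\widetilde L$, the writhe $w(\widetilde L)$ is the sum over crossings of the standard crossing signs ($\pm1$) determined by the orientation, and $J_L(t):=(-1)^{w(\widetilde L)}t^{3w(\widetilde L)/4}\langle\widetilde L\rangle\bigl(t^{-1/4},t^{1/4},-t^{1/2}-t^{-1/2}\bigr)$. *)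

(* Defs.v *)
From HB Require Import structures.
From mathcomp Require Import all_boot all_order all_algebra all_fingroup.
Unset Printing Implicit Defensive.
Import Order.TTheory GRing.Theory Num.Theory.
Local Open Scope ring_scope.

(* A signed ribbon graph given as a combinatorial map:
   - darts (half-edges / edge-ends),
   - [rot]: counterclockwise cyclic order of edge-ends at each vertex
     (vertices = cycles of [rot]),
   - [einv]: fixed-point-free involution pairing the two ends of each edge
     (edges = orbits of [einv]),
   - [neg d]: the edge containing d has sign -1. *)
Record sribbon := SRibbon {
  dart : finType;
  rot : {perm dart};
  einv : dart -> dart;
  neg : dart -> bool;
  einvK : involutive einv;
  einv_fpf : forall d, einv d != d;
  neg_einv : forall d, neg (einv d) = neg d }.

Set Implicit Arguments. Unset Strict Implicit.

Section RibbonDefs.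
Variable G : sribbon.
Local Notation D := (dart G).

(* spanning subgraphs = sets of darts closed under einv (unions of edges) *)
Definition inv_closed (F : {set D}) : bool :=
  [forall d, (d \in F) ==> (einv G d \in F)].

Definition nverts : nat := fcard (rot G) D.
Definition nedges (F : {set D}) : nat := #|F| %/ 2.

(* connected components of the spanning subgraph F (all vertices of G) *)
Definition comp_rel (F : {set D}) : rel D :=
  fun x y => (y == rot G x) || ((x \in F) && (y == einv G x)).
Definition ncomp (F : {set D}) : nat := n_comp (comp_rel F) D.

Definition rank (F : {set D}) : int := (nverts%:Z - (ncomp F)%:Z)%R.
Definition nullity (F : {set D}) : int := ((nedges F)%:Z - rank F)%R.

Definition rotF (F : {set D}) (d : D) : D :=
  head d [seq x <- traject (rot G) (rot G d) #|D| | x \in F].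
Definition face (F : {set D}) (d : D) : D :=
  if d \in F then rotF F (einv G d) else d.
Definition nfaces (F : {set D}) : nat := fcard (face F) F.
(* vertices of G carrying no edge of F: each is a disc contributing one
   boundary component *)
Definition iso_verts (F : {set D}) : nat :=
  fcard (rot G) [pred d | [forall x in F, ~~ fconnect (rot G) d x]].
Definition bc (F : {set D}) : nat := nfaces F + iso_verts F.

Definition negs (F : {set D}) : nat := #|[set d in F | neg G d]| %/ 2.

Definition genus2 : int :=
  (2 * (ncomp setT)%:Z - nverts%:Z + (nedges setT)%:Z - (bc setT)%:Z)%R.
Definition planar : bool := genus2 == 0.

(* signed Bollobas--Riordan polynomial evaluated at (x,y,z); the exponents
   r(G)-r(F)+s(F), n(F)-s(F) are half-integers, x^(m/2) is read as
   (sqrtC x)^m (principal square root). *)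
Definition twice_s (F : {set D}) : int := ((negs F)%:Z - (negs (~: F))%:Z)%R.
Definition BR_eval (C : numClosedFieldType) (x y z : C) : C :=
  \sum_(F : {set D} | inv_closed F)
     sqrtC x ^ (2 * (rank setT - rank F) + twice_s F)
   * sqrtC y ^ (2 * nullity F - twice_s F)
   * z ^ ((ncomp F)%:Z - (bc F)%:Z + nullity F).

Definition tutte (C : numClosedFieldType) (x y : C) : C :=
  \sum_(F : {set D} | inv_closed F)
     (x - 1) ^ (rank setT - rank F) * (y - 1) ^ (nullity F).

End RibbonDefs.

(* A link diagram on an oriented surface, combinatorially: a finite set of
   crossing ends; [dccw] rotates counterclockwise among the 4 ends of a
   crossing (crossings = orbits of dccw); [darc] pairs ends joined by an arc
   of the diagram; [dover e] says e is an end of the overcrossing branch. *)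
Unset Implicit Arguments.
Record diagram := Diagram {
  dE : finType;
  dccw : dE -> dE;
  darc : dE -> dE;
  dover : dE -> bool }.

Set Implicit Arguments.
Section DiagramDefs.
Variable Dg : diagram.
Local Notation E := (dE Dg).

(* states: a splitting (true = A, false = B) per crossing *)
Definition state_ok (s : {ffun E -> bool}) : bool :=
  [forall e, s (dccw Dg e) == s e].

(* local partner of the end e after splitting: the A-splitting joins the two
   regions swept by the overcrossing arc turning counterclockwise, i.e. joins
   over end e to ccw^-1 e and under end e to ccw e; B the other way. *)
Definition split (s : {ffun E -> bool}) (e : E) : E :=
  if s e == dover Dg e then dccw Dg (dccw Dg (dccw Dg e)) else dccw Dg e.

Definition state_rel (s : {ffun E -> bool}) : rel E :=
  fun e f => (f == darc Dg e) || (f == split s e).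
Definition delta (s : {ffun E -> bool}) : nat := n_comp (state_rel s) E.
Definition alpha (s : {ffun E -> bool}) : nat := #|[set e | s e]| %/ 4.
Definition beta (s : {ffun E -> bool}) : nat := #|[set e | ~~ s e]| %/ 4.

Definition kbracket (C : numFieldType) (A B d : C) : C :=
  \sum_(s : {ffun E -> bool} | state_ok s)
     A ^+ alpha s * B ^+ beta s * d ^ ((delta s)%:Z - 1).

(* an orientation: [o e] = the oriented curve leaves the crossing at end e *)
Definition is_orientation (o : E -> bool) : Prop :=
  forall e, o (dccw Dg (dccw Dg e)) = ~~ o e /\ o (darc Dg e) = ~~ o e.

(* writhe: at each crossing, with outgoing over end eo, the crossing is
   positive iff the outgoing under end is ccw eo (right-hand rule w.r.t. the
   orientation of the surface). *)
Definition writhe (o : E -> bool) : int :=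
  \sum_(e | dover Dg e && o e) (if o (dccw Dg e) then 1 else -1).

Definition jones (C : numClosedFieldType) (o : E -> bool) (t : C) : C :=
  let q := sqrtC (sqrtC t) in
  (-1) ^ writhe o * q ^ (3 * writhe o)
  * kbracket q^-1 q (- sqrtC t - (sqrtC t)^-1).

End DiagramDefs.

(* Ends of the crossing of edge
   {x, einv x}: (x,true) heads to the corner between x and rot x,
   (x,false) to the corner between rot^-1 x and x.  Counterclockwise order
   at the crossing: (einv x,false),(x,true),(x,false),(einv x,true).
   Regions between (x,true),(x,false) and between (einv x,true),(einv x,false)
   are black; for a positive edge the overcrossing branch is the one through
   the true-ends (turning it counterclockwise sweeps the black regions);
   negative edges switch over and under. *)
Definition medial (G : sribbon) : diagram :=
  @Diagram (dart G * bool)%type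
    (fun p => if p.2 then (p.1, false) else (einv G p.1, true))
    (fun p => if p.2 then (rot G p.1, false) else ((rot G)^-1%g p.1, true))
    (fun p => p.2 (+) neg G p.1).

(* Main.v *)
Require Import Defs.
From mathcomp Require Import all_boot all_order all_algebra all_fingroup zify ring.
Import Order.TTheory GRing.Theory Num.Theory.
Set Implicit Arguments. Unset Strict Implicit. Unset Printing Implicit Defensive.

Lemma connect_map (T T' : finType) (f : T -> T') (e : rel T) (e' : rel T') :
  (forall x y, e x y -> connect e' (f x) (f y)) ->
  forall x y, connect e x y -> connect e' (f x) (f y).
Proof.
move=> H x y /connectP[p pth ->]; elim: p x pth => //= z p IH x /andP[exz pz].
exact: connect_trans (H _ _ exz) (IH _ pz).
Qed.

Lemma connect_fwd (T : finType) (e : rel T) (a : {pred T}) :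
  (forall u v, u \in a -> e u v -> v \in a) ->
  forall x y, connect e x y -> x \in a -> y \in a.
Proof.
move=> H x y /connectP[p pth ->]; elim: p x pth => //= z p IH x /andP[exz pz] xa.
exact: IH pz (H _ _ xa exz).
Qed.

Lemma connect_restrict (T : finType) (e e' : rel T) (a : {pred T}) :
  (forall u v, u \in a -> e u v = e' u v) ->
  (forall u v, u \in a -> e u v -> v \in a) ->
  forall x y, x \in a -> connect e x y = connect e' x y.
Proof.
move=> Heq Hcl x y xa; apply/idP/idP => /connectP[p pth ->];
  elim: p x xa pth => //= z p IH x xa /andP[exz pz].
- have za := Hcl _ _ xa exz.
  by apply: connect_trans (IH _ za pz); rewrite connect1 // -Heq.
- have exz' : e x z by rewrite Heq.
  have za := Hcl _ _ xa exz'.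
  by apply: connect_trans (IH _ za pz); rewrite connect1.
Qed.

Lemma connect_sym_of (T : finType) (e : rel T) :
  (forall x y, e x y -> connect e y x) -> connect_sym e.
Proof.
move=> H.
suff S : forall x y, connect e x y -> connect e y x.
  by move=> x y; apply/idP/idP; apply: S.
move=> x y /connectP[p pth ->]; elim: p x pth => //= z p IH x /andP[exz pz].
exact: connect_trans (IH _ pz) (H _ _ exz).
Qed.

Lemma n_comp_restrict (T : finType) (e e' : rel T) (a : {pred T}) :
  (forall x, x \in a -> connect e x =1 connect e' x) ->
  n_comp e a = n_comp e' a.
Proof.
move=> H; rewrite /n_comp_mem; apply: eq_card => x; rewrite !inE.
case xa: (x \in a); rewrite ?andbF //.
by rewrite /roots /fingraph.root (eq_pick (H x xa)).
Qed.

Lemma n_comp_adj (T T' : finType) (h : T' -> T) (e : rel T) (e' : rel T')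
    (a : {pred T}) (a' : {pred T'}) :
  connect_sym e -> connect_sym e' -> closed e a -> closed e' a' ->
  (forall x', x' \in a' -> h x' \in a) ->
  (forall x, x \in a -> exists2 x', x' \in a' & connect e x (h x')) ->
  (forall x' y', x' \in a' -> y' \in a' -> connect e' x' y' = connect e (h x') (h y')) ->
  n_comp e a = n_comp e' a'.
Proof.
move=> se se' cla cla' ha hunit hfun.
have ccla := closed_connect cla; have ccla' := closed_connect cla'.
have inj_h: {in predI (roots e') a' &, injective (fingraph.root e \o h)}.
  move=> x' y' /andP[/eqP r_x' a_x'] /andP[/eqP r_y' a_y'] /(fingraph.rootP se).
  rewrite -(hfun x' y' a_x' a_y') => /(fingraph.rootP se'); by rewrite r_x' r_y'.
rewrite /n_comp_mem -(card_in_image inj_h); apply: eq_card => x.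
apply/andP/imageP=> [[/eqP rx a_x] | [x' /andP[/eqP r_x' a_x'] ->]]; last first.
  split; first by rewrite /= roots_root.
  by rewrite /= -(ccla _ _ (connect_root _ _)) ha.
have [y' a_y' e_xy] := hunit x a_x; pose x' := fingraph.root e' y'.
have ax' : x' \in a' by rewrite -(ccla' _ _ (connect_root _ y')).
have e_yx: connect e (h y') (h x') by rewrite -hfun ?connect_root.
exists x'; first by apply/andP; split; [rewrite /= roots_root | exact: ax'].
by rewrite /= -(fingraph.rootP se e_yx) -(fingraph.rootP se e_xy).
Qed.

Lemma fconnect_porbit (T : finType) (s : {perm T}) x y :
  fconnect s x y = (y \in porbit s x).
Proof.
apply/idP/porbitP => [/iter_findex <- | [i ->]].
  by exists (findex s x y); rewrite permX.
by rewrite permX fconnect_iter.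
Qed.

Lemma fcard_porbits (T : finType) (s : {perm T}) : fcard s T = #|porbits s|.
Proof.
have sym : connect_sym (frel s) by apply: fconnect_sym; apply: perm_inj.
rewrite /porbits /n_comp_mem.
have -> : porbit s @: T = porbit s @: [set x | froots s x].
  apply/setP => P; apply/imsetP/imsetP => [[x _ ->]|[x _ ->]]; last by exists x.
  exists (froot s x); first by rewrite inE roots_root.
  apply/eqP; rewrite eq_porbit_mem -fconnect_porbit.
  by rewrite sym connect_root.
rewrite card_in_imset; first by apply: eq_card => x; rewrite !inE andbT.
move=> x y; rewrite !inE => /eqP rx /eqP ry /eqP.
rewrite eq_porbit_mem -fconnect_porbit => /(fingraph.rootP sym).
by rewrite rx ry.
Qed.

Lemma head_filter (T : Type) (x0 : T) (p : pred T) (s : seq T) :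
  head x0 (filter p s) = nth x0 s (find p s).
Proof. by elim: s => //= y s IH; case: (p y). Qed.

Section Ribbon.
Variable G : sribbon.
Local Notation D := (dart G).
Local Notation r := (Defs.rot G).
Local Notation ei := (einv G).

Lemma eiK : involutive ei. Proof. exact: einvK. Qed.
Lemma ei_inj : injective ei. Proof. exact: inv_inj eiK. Qed.

Definition phif (F : {set D}) (d : D) : D :=
  if (d \in F) && (ei d \in F) then ei d else d.

Lemma phif_inj F : injective (phif F).
Proof.
move=> x y; rewrite /phif.
case: ifP => hx; case: ifP => hy; first by move/ei_inj.
- move=> E; move: hy; rewrite -E eiK; case/andP: hx => -> ->; by [].
- move=> E; move: hx; rewrite E eiK; case/andP: hy => -> ->; by [].
- by [].
Qed.

Definition phip F : {perm D} := perm (@phif_inj F).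
Definition psi F : {perm D} := (r * phip F)%g.
Lemma psiE F x : psi F x = phif F (r x).
Proof. by rewrite /psi permM /phip permE. Qed.

Lemma psi_sym F : connect_sym (frel (psi F)).
Proof. by apply: fconnect_sym; apply: perm_inj. Qed.

Variable F : {set D}.
Hypothesis Fc : inv_closed F.

Lemma eiF x : (ei x \in F) = (x \in F).
Proof.
have H : forall y, y \in F -> ei y \in F.
  by move=> y yF; move/forallP: Fc => /(_ y) /implyP; apply.
by apply/idP/idP => [/H|/H//]; rewrite eiK.
Qed.

Lemma phifE x : phif F x = if x \in F then ei x else x.
Proof. by rewrite /phif eiF andbb. Qed.

Lemma iter_psi v j : (forall i, 0 < i <= j -> iter i r v \notin F) ->
  iter j (psi F) v = iter j r v.
Proof.
elim: j => //= j IH H.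
rewrite IH; last by move=> i /andP[i0 ij]; apply: H; rewrite i0 ltnW.
rewrite psiE phifE -iterS.
by have := H j.+1 (leqnn _); case: (_ \in F).
Qed.

Local Notation N := #|D|.

Lemma rotF_spec d : (exists2 n, 0 < n <= N & iter n r d \in F) ->
  exists k, [/\ 0 < k <= N, rotF F d = iter k r d, iter k r d \in F
          & forall i, 0 < i < k -> iter i r d \notin F].
Proof.
case=> n /andP[n0 nN] nF.
set s := traject r (r d) N.
have nth_s : forall i, i < N -> nth d s i = iter i.+1 r d.
  by move=> i iN; rewrite /s (set_nth_default (r d)) ?size_traject // nth_traject // iterSr.
have hs : has (mem F) s.
  apply/(has_nthP d); exists n.-1; first by rewrite size_traject prednK // (leq_trans _ nN) // ltnW.
  by rewrite nth_s ?prednK // (leq_trans _ nN) // ltnW.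
have fl : find (mem F) s < N by rewrite -(size_traject r (r d) N) -has_find.
exists (find (mem F) s).+1; split.
- by [].
- by rewrite /rotF head_filter nth_s.
- by rewrite -nth_s //; apply: (nth_find d hs).
- move=> i /andP[i0 ik].
  have ik' : i.-1 < find (mem F) s by rewrite -ltnS prednK.
  have iN : i.-1 < N := ltn_trans ik' fl.
  have := before_find d ik'; rewrite nth_s // prednK //.
  by move=> /= ->.
Qed.

Lemma order_leN x : fingraph.order r x <= N.
Proof. exact: max_card. Qed.

Lemma rotF_specF d : d \in F ->
  exists k, [/\ 0 < k <= N, rotF F d = iter k r d, iter k r d \in F
          & forall i, 0 < i < k -> iter i r d \notin F].
Proof.
move=> dF; apply: rotF_spec; exists (fingraph.order r d).
  by rewrite fingraph.order_gt0 order_leN.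
by rewrite iter_order //; apply: perm_inj.
Qed.

Lemma psi_step w : w \in F -> exists k,
  [/\ 0 < k, iter k (psi F) w = ei (rotF F w), rotF F w \in F
    & forall i, 0 < i < k -> iter i (psi F) w \notin F].
Proof.
move=> wF; have [k [/andP[k0 kN] rE rF rnF]] := rotF_specF wF.
have Hi : forall i, 0 < i < k -> iter i (psi F) w = iter i r w.
  move=> i /andP[i0 ik]; apply: iter_psi => j /andP[j0 ji]; apply: rnF.
  by rewrite j0 (leq_ltn_trans ji).
exists k; split => //; last (by move=> i ik; rewrite Hi //; apply: rnF); last by rewrite rE.
have Hk1 : iter k.-1 (psi F) w = iter k.-1 r w.
  by apply: iter_psi => j /andP[j0 jk]; apply: rnF; rewrite j0 (leq_ltn_trans jk) // prednK.
have -> : iter k (psi F) w = psi F (iter k.-1 (psi F) w) by rewrite -iterS prednK.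
by rewrite Hk1 psiE phifE -iterS prednK // rF rE.
Qed.

Lemma FR x y : x \in F -> y \in F ->
  fconnect (face F) x y = fconnect (psi F) (ei x) (ei y).
Proof.
move=> xF yF; apply/idP/idP.
  move: x y {xF yF}; apply: connect_map => u v /eqP <-.
  rewrite /face; case: ifP => uF //.
  have [k [_ kE _ _]] := psi_step (etrans (eiF u) uF).
  by rewrite -kE fconnect_iter.
move=> /iter_findex; move: (findex _ _ _) => n.
elim/ltn_ind: n x xF => n IH x xF.
case: n IH => [|n] IH.
  by move=> /= E; rewrite -(eiK x) E eiK.
move=> E0.
have eF : ei x \in F by rewrite eiF.
have [k [k0 kE kF knF]] := psi_step eF.
have nk : k <= n.+1.
  rewrite leqNgt; apply/negP => nk.
  by move: (knF n.+1); rewrite nk E0 eiF yF => /(_ isT).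
move: E0; rewrite -(subnK nk) iterD kE => E.
have lt : n.+1 - k < n.+1 by rewrite ltn_subrL k0.
have H := IH (n.+1 - k) lt (rotF F (ei x)) kF E.
apply: connect_trans H; apply: connect1 => /=; by rewrite /face xF.

Qed.

Lemma face_sym : connect_sym (frel (face F)).
Proof.
apply: connect_sym_of => x y /eqP <-.
case xF: (x \in F); last first.
  have fE : face F x = x by rewrite /face xF.
  by rewrite fE connect0.
have fE : face F x = rotF F (ei x) by rewrite /face xF.
have yF : rotF F (ei x) \in F.
  by have [k [_ -> kF _]] := rotF_specF (etrans (eiF x) xF).
have := FR xF yF; rewrite psi_sym -FR // -fE => <-.
by apply: connect1 => /=.
Qed.

End Ribbon.

Section Ribbon2.
Variable G : sribbon.
Local Notation D := (dart G).
Local Notation r := (Defs.rot G).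
Local Notation ei := (einv G).
Variable F : {set D}.
Hypothesis Fc : inv_closed F.

Local Notation P := (closure (frel (psi F)) F).

Lemma face_closed : closed (frel (face F)) F.
Proof.
apply: (intro_closed (face_sym Fc)) => x y /eqP <- xF.
rewrite /face xF.
by have [k [_ -> kF _]] := rotF_specF (etrans (eiF Fc x) xF).
Qed.

Lemma closureP x : reflect (exists2 y, fconnect (psi F) x y & y \in F) (x \in P).
Proof.
apply: (iffP idP).
  by case/existsP => y; rewrite !inE => /andP[xy yF]; exists y.
by case=> y xy yF; apply/existsP; exists y; rewrite !inE xy yF.
Qed.

Lemma nfaces_psi : nfaces F = n_comp (frel (psi F)) P.
Proof.
symmetry; apply: (@n_comp_adj _ _ ei).
- exact: psi_sym.
- exact: face_sym.
- exact: (closure_closed (psi_sym F)).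
- exact: face_closed.
- by move=> x xF; apply: mem_closure; rewrite (eiF Fc).
- move=> x /closureP[y xy yF]; exists (ei y); first by rewrite (eiF Fc).
  by rewrite eiK.
- by move=> x y xF yF; rewrite (FR Fc).
Qed.

Local Notation Iso := [pred d | [forall x in F, ~~ fconnect r d x]].

Lemma rot_iso u : u \in Iso -> r u \notin F.
Proof.
move=> /forallP /(_ (r u)); rewrite fconnect1 implybF; by [].
Qed.

Lemma psi_iso u : u \in Iso -> psi F u = r u.
Proof. by move=> /rot_iso ru; rewrite psiE (phifE Fc) (negbTE ru). Qed.

Lemma iso_r u : u \in Iso -> r u \in Iso.
Proof.
move=> /forallP H; apply/forallP => x; have := H x.
by rewrite (same_fconnect1 (@perm_inj _ r) u).
Qed.

Lemma iso_notP x : (x \in Iso) = (x \notin P).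
Proof.
apply/idP/idP.
  move=> xI; apply/negP => /closureP[y xy yF].
  have yI : y \in Iso.
    apply: (connect_fwd _ xy xI) => u v uI /eqP <-.
    by rewrite psi_iso // iso_r.
  by move: yI => /forallP /(_ y); rewrite yF connect0.
move=> xP; apply/negPn/negP => /forallPn [y]; rewrite negb_imply negbK => /andP[yF xy].
case xF: (x \in F).
  by move: xP; rewrite mem_closure.
pose n := findex r x y.
have ny : iter n r x = y by apply: iter_findex.
have n0 : 0 < n.
  rewrite lt0n; apply/negP => /eqP n0; move: ny; rewrite n0 /= => E.
  by rewrite E yF in xF.
have nN : n <= #|D|.
  exact: ltnW (leq_trans (findex_max xy) (order_leN x)).
have ex : exists2 m, 0 < m <= #|D| & iter m r x \in F by exists n; rewrite ?n0 ?nN ?ny.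
have [k [/andP[k0 kN] _ kF knF]] := rotF_spec ex.
have Hk1 : iter k.-1 (psi F) x = iter k.-1 r x.
  by apply: (iter_psi Fc) => // j /andP[j0 jk]; apply: knF; rewrite j0 (leq_ltn_trans jk) // prednK.
have Hk : iter k (psi F) x = ei (iter k r x).
  by rewrite -(prednK k0) iterS Hk1 psiE (phifE Fc) -iterS prednK // kF.
move/negP: xP; apply; apply/closureP; exists (ei (iter k r x)).
  by rewrite -Hk fconnect_iter.
by rewrite (eiF Fc).
Qed.

Lemma bc_psi : bc F = fcard (psi F) D.
Proof.
rewrite /bc (n_compC P) -nfaces_psi; congr (_ + _).
rewrite /iso_verts (eq_n_comp_r (a' := [predC P])); last by move=> x; rewrite !inE -iso_notP.
apply: n_comp_restrict => x; rewrite inE => xP y.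
have xI : x \in Iso by rewrite iso_notP.
symmetry; apply: connect_restrict xI.
- by move=> u v uI /=; rewrite psi_iso.
- by move=> u v uI /eqP <-; rewrite psi_iso // iso_r.
Qed.

End Ribbon2.

Section Ribbon3.
Variable G : sribbon.
Local Notation D := (dart G).
Local Notation r := (Defs.rot G).
Local Notation ei := (einv G).
Local Notation E := (dE (medial G)).

Definition stF (F : {set D}) : {ffun E -> bool} :=
  [ffun p : E => (p.1 \in F) (+) neg G p.1].

Variable F : {set D}.
Hypothesis Fc : inv_closed F.

Lemma phifK : involutive (phif F).
Proof.
move=> x; rewrite !(phifE Fc); case xF: (x \in F); last by rewrite xF.
by rewrite (eiF Fc) xF eiK.
Qed.

Lemma splitE (x : D) (b : bool) : Defs.split (stF F) ((x, b) : E) = ((phif F x, ~~ b) : E).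
Proof.
rewrite /Defs.split /stF ffunE /= (phifE Fc).
case: b; case xF: (x \in F); case: (neg G x) => //=; by rewrite ?eiK.
Qed.

Lemma darcK : involutive (darc (medial G)).
Proof. by case=> x [] /=; rewrite ?permK ?permKV. Qed.

Lemma splitK : involutive (Defs.split (stF F)).
Proof. by case=> x b; rewrite !splitE phifK negbK. Qed.

Lemma state_sym : connect_sym (state_rel (stF F)).
Proof.
apply: sym_connect_sym => u v; rewrite /state_rel.
have E1 : (v == darc (medial G) u) = (u == darc (medial G) v).
  by apply/eqP/eqP => ->; rewrite darcK.
have E2 : (v == Defs.split (stF F) u) = (u == Defs.split (stF F) v).
  by apply/eqP/eqP => ->; rewrite splitK.
by rewrite E1 E2.
Qed.

Definition piE (u : E) : D := if u.2 then u.1 else (r^-1)%g u.1.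

Lemma delta_psi : delta (stF F) = fcard (psi F) D.
Proof.
apply: (@n_comp_adj _ _ (fun x : D => ((x, true) : E))).
- exact: state_sym.
- exact: psi_sym.
- by [].
- by [].
- by [].
- case=> x [] _; first by exists x.
  exists ((r^-1)%g x) => //; apply: connect1; rewrite /state_rel /=.
  by rewrite eqxx.
- move=> x y _ _; apply/idP/idP.
  + apply: (@connect_map _ _ (fun z : D => ((z, true) : E)) (frel (psi F)) (state_rel (stF F))) => u v /eqP <-.
    apply: (@connect_trans _ _ ((r u, false) : E)); apply: connect1;
      rewrite /state_rel /=.
      by rewrite eqxx.
    by rewrite splitE psiE eqxx orbT.
  + have H := @connect_map _ _ piE (state_rel (stF F)) (frel (psi F)).
    apply: H => -[u b] [v c]; rewrite /state_rel splitE.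
    case: b => /= /orP[] /eqP[-> ->]; rewrite /piE /=.
    * by rewrite (permK r) connect0.
    * rewrite psi_sym; apply: connect1 => /=.
      by rewrite psiE (permKV r) phifK.
    * by rewrite connect0.
    * by apply: connect1 => /=; rewrite psiE (permKV r).
Qed.

End Ribbon3.

Section Ribbon4.
Variable G : sribbon.
Local Notation D := (dart G).
Local Notation r := (Defs.rot G).
Local Notation ei := (einv G).

Lemma comp_sym (F : {set D}) : inv_closed F -> connect_sym (comp_rel F).
Proof.
move=> Fc; apply: connect_sym_of => x y; rewrite /comp_rel.
case/orP => [/eqP -> | /andP[xF /eqP ->]].
  apply: (connect_sub (e := frel r)).
    by move=> u v /eqP <-; apply: connect1; rewrite /= eqxx.
  by rewrite (fconnect_sym (@perm_inj _ r)) fconnect1.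
by apply: connect1; rewrite /= eiK (eiF Fc) xF eqxx orbT.
Qed.

Lemma psi_comp (F : {set D}) x y : inv_closed F -> fconnect (psi F) x y -> connect (comp_rel F) x y.
Proof.
move=> Fc; apply: connect_sub => u v /eqP <-; rewrite psiE (phifE Fc).
apply: (@connect_trans _ _ (r u)); first by apply: connect1; rewrite /comp_rel eqxx.
case: ifP => // ruF; apply: connect1; by rewrite /comp_rel ruF eqxx orbT.
Qed.

Definition genusF (F : {set D}) : int :=
  (2 * (ncomp F)%:Z - (nverts G)%:Z + (nedges F)%:Z - (bc F)%:Z)%R.

Section Step.
Variable F : {set D}.
Hypothesis Fc : inv_closed F.
Variable a : D.
Hypothesis aF : a \notin F.
Local Notation F' := (F :|: [set a; ei a]).

Lemma eaF : ei a \notin F. Proof. by rewrite (eiF Fc). Qed.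
Lemma a_ea : a != ei a. Proof. by rewrite eq_sym einv_fpf. Qed.

Lemma Fc' : inv_closed F'.
Proof.
apply/forallP => x; apply/implyP; rewrite !inE => /orP[xF|/orP[]/eqP->];
  by rewrite ?(eiF Fc) ?xF ?eiK ?eqxx ?orbT.
Qed.

Lemma psiF' : psi F' = (psi F * tperm a (ei a))%g.
Proof.
apply/permP => x; rewrite permM !psiE (phifE Fc') (phifE Fc).
move: (r x) => y; rewrite !inE.
case yF: (y \in F) => /=.
  rewrite tpermD //.
    by apply: contraNneq aF => ->; rewrite (eiF Fc).
  by apply: contraNneq eaF => ->; rewrite (eiF Fc).
case: (eqVneq y a) => [->|ya] /=; first by rewrite tpermL.
case: (eqVneq y (ei a)) => [->|yea] /=; first by rewrite tpermR eiK.
by rewrite tpermD // eq_sym.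
Qed.

Lemma bc_step : bc F' + (~~ fconnect (psi F) (ei a) a).*2 = (bc F).+1.
Proof.
rewrite (bc_psi Fc') (bc_psi Fc) !fcard_porbits psiF'.
rewrite -porbitsV invMg tpermV -(porbitsV (psi F)).
have := porbits_mul_tperm (psi F)^-1 a (ei a).
by rewrite porbitV -fconnect_porbit a_ea addn1.
Qed.

Lemma comp_relF' u v :
  comp_rel F' u v = comp_rel F u v || ((u \in [set a; ei a]) && (v == ei u)).
Proof.
rewrite /comp_rel in_setU; case: (v == r u) => //=.
by rewrite andb_orl.
Qed.

Lemma K1 : connect (comp_rel F) a (ei a) -> ncomp F' = ncomp F.
Proof.
move=> con; rewrite /ncomp; apply: eq_n_comp => x y; apply/idP/idP.
  apply: connect_sub => u v; rewrite comp_relF' => /orP[/connect1 //|].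
  rewrite !inE => /andP[/orP[] /eqP -> /eqP ->] //.
  by rewrite eiK (comp_sym Fc).
apply: connect_sub => u v uv; apply: connect1; by rewrite comp_relF' uv.
Qed.

Lemma K2 : ncomp F <= (ncomp F').+1.
Proof.
have sF := comp_sym Fc; have sF' := comp_sym Fc'.
set c := closure (comp_rel F) (pred2 a (ei a)).
have clc : closed (comp_rel F) c by apply: closure_closed.
have ac : a \in c by apply: mem_closure; rewrite !inE eqxx.
have eac : ei a \in c by apply: mem_closure; rewrite !inE eqxx orbT.
have clc' : closed (comp_rel F') c.
  apply: intro_closed => // u v; rewrite comp_relF' => /orP[uv|].
    by rewrite (clc _ _ uv).
  by rewrite !inE => /andP[/orP[]/eqP-> /eqP->] _; rewrite ?eiK.
have e1 : n_comp (comp_rel F) [predC c] = n_comp (comp_rel F') [predC c].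
  apply: n_comp_restrict => x xc y; apply: connect_restrict xc.
  - move=> u v uc; rewrite comp_relF'.
    have -> : (u \in [set a; ei a]) = false.
      apply/negbTE; rewrite !inE; apply/negP => /orP[]/eqP E; move: uc;
        by rewrite !inE E ?ac ?eac.
    by rewrite orbF.
  - by move=> u v uc uv; rewrite inE -(clc _ _ uv).
rewrite /ncomp (n_compC c) (n_compC c (comp_rel F')) e1.
have h1 : n_comp (comp_rel F) c <= 2 by rewrite /c n_comp_closure2 //; case: connect.
have h2 : 0 < n_comp (comp_rel F') c.
  rewrite /n_comp_mem; apply/card_gt0P; exists (fingraph.root (comp_rel F') a).
  rewrite !inE roots_root //=.
  by rewrite -(closed_connect clc' (connect_root _ a)).
rewrite -addSn; apply: leq_add => //; by apply: leq_trans h1 _.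
Qed.

Lemma nedges_step : nedges F' = (nedges F).+1.
Proof.
rewrite /nedges cardsU disjoint_setI0; last first.
  rewrite disjoint_sym; apply/pred0P => x; rewrite !inE.
  by apply/negP => /andP[/orP[]/eqP-> ]; [apply/negP: aF | apply/negP: eaF].
by rewrite cards0 subn0 cards2 a_ea; lia.
Qed.

Lemma genus_step : (genusF F <= genusF F')%R.
Proof.
rewrite /genusF nedges_step.
have bs := bc_step.
case: (boolP (fconnect (psi F) (ei a) a)) => con; move: bs; rewrite ?con /= => bs.
  rewrite addn0 in bs.
  rewrite K1; last by rewrite (comp_sym Fc); apply: psi_comp.
  rewrite bs; lia.
have k2 := K2.
have bs' : bc F = (bc F').+1 by move: bs; rewrite -addn1 /= => ?; lia.
rewrite bs'; lia.
Qed.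

End Step.
End Ribbon4.

Section Ribbon5.
Variable G : sribbon.
Local Notation D := (dart G).
Local Notation r := (Defs.rot G).
Local Notation ei := (einv G).

Lemma genus_mono (F1 F2 : {set D}) : inv_closed F1 -> inv_closed F2 ->
  F1 \subset F2 -> (genusF F1 <= genusF F2)%R.
Proof.
move=> F1c F2c; move: {2}#|F2 :\: F1| (erefl #|F2 :\: F1|) => n.
elim/ltn_ind: n F1 F1c => n IH F1 F1c nE sub.
case: (set_0Vmem (F2 :\: F1)) => [E|[a]].
  have -> : F1 = F2.
    apply/eqP; rewrite eqEsubset sub /=; apply/subsetP => x xF2.
    apply/negPn/negP => xF1.
    have : x \in F2 :\: F1 by rewrite inE xF2 andbT.
    by rewrite E inE.
  by [].
rewrite inE => /andP[aF1 aF2].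
have aF : ei a \in F2 by rewrite (eiF F2c).
apply: (Order.POrderTheory.le_trans (genus_step F1c aF1)).
apply: (IH #|F2 :\: (F1 :|: [set a; ei a])%SET|) => //.
- rewrite -nE; apply: proper_card; rewrite properE; apply/andP; split.
    by apply: setDS; apply: subsetUl.
  apply/subsetPn; exists a; first by rewrite inE aF1 aF2.
  by rewrite !inE eqxx orbT.
- exact: Fc'.
- by rewrite subUset sub /=; apply/subsetP => x; rewrite !inE => /orP[]/eqP->.
Qed.

Lemma genus0 : genusF (set0 : {set D}) = 0%R.
Proof.
rewrite /genusF /bc /nedges cards0 div0n.
have k0 : ncomp (set0 : {set D}) = nverts G.
  rewrite /ncomp /nverts; apply: eq_n_comp => x y; apply: eq_connect => u v.
  by rewrite /comp_rel inE andFb orbF eq_sym.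
have f0 : nfaces (set0 : {set D}) = 0.
  by rewrite /nfaces /n_comp_mem; apply: eq_card0 => x; rewrite !inE andbF.
have i0 : iso_verts (set0 : {set D}) = nverts G.
  rewrite /iso_verts /nverts; apply: eq_n_comp_r => x; rewrite !inE.
  by apply/forallP => y; rewrite inE.
rewrite k0 f0 i0; lia.
Qed.

Lemma genusT : genusF [set: D] = genus2 G.
Proof. by []. Qed.

Lemma genus_planar (F : {set D}) : planar G -> inv_closed F -> genusF F = 0%R.
Proof.
move=> /eqP pl Fc.
have Tc : inv_closed [set: D] by apply/forallP => x; rewrite !inE.
have h1 := genus_mono Fc Tc (subsetT F).
have c0 : inv_closed (set0 : {set D}) by apply/forallP => x; rewrite inE.
have h2 := genus_mono c0 Fc (sub0set F).
rewrite genus0 in h2; rewrite genusT pl in h1.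
by apply/eqP; rewrite Order.POrderTheory.eq_le h1 h2.
Qed.

End Ribbon5.

Section Ribbon6.
Variable G : sribbon.
Local Notation D := (dart G).
Local Notation r := (Defs.rot G).
Local Notation ei := (einv G).
Local Notation E := (dE (medial G)).

Lemma even_ei (S : {set D}) : (forall x, (ei x \in S) = (x \in S)) -> ~~ odd #|S|.
Proof.
move: {2}#|S| (erefl #|S|) => n; elim/ltn_ind: n S => n IH S nE Sc.
case: (set_0Vmem S) => [->|[x xS]]; first by rewrite cards0.
set S' := S :\: [set x; ei x].
have xe : x != ei x by rewrite eq_sym einv_fpf.
have eS : ei x \in S by rewrite Sc.
have cS : #|S| = #|S'| + 2.
  rewrite /S' -(cardsID [set x; ei x] S) addnC; congr (_ + _).
  have -> : S :&: [set x; ei x] = [set x; ei x].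
    by apply/setIidPr; apply/subsetP => y; rewrite !inE => /orP[]/eqP->.
  by rewrite cards2 xe.
have lt : #|S'| < n by rewrite -nE cS addn2.
rewrite cS addn2 /= negbK; apply: (IH _ lt S' erefl) => y; rewrite /S' !inE Sc.
have e1 : (ei y == x) = (y == ei x) by apply/eqP/eqP => [<-|->]; rewrite eiK.
have e2 : (ei y == ei x) = (y == x) by rewrite (inj_eq (@ei_inj G)).
by rewrite e1 e2 orbC.
Qed.

Lemma card_split (p q : pred D) :
  #|[set x | p x]| = #|[set x | p x && q x]| + #|[set x | p x && ~~ q x]|.
Proof.
rewrite -(cardsID [set x | q x] [set x | p x]); congr (_ + _); apply: eq_card => x;
  by rewrite !inE // andbC.
Qed.

Lemma cardE_split (F : {set D}) :
  #|[set e : E | stF F e]| = (#|[set x : D | (x \in F) (+) neg G x]| * 2)%N.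
Proof.
have -> : [set e : E | stF F e] = setX [set x : D | (x \in F) (+) neg G x] [set: bool].
  by apply/setP => -[x b]; rewrite !inE /stF ffunE andbT.
by rewrite cardsX cardsT card_bool.
Qed.

Lemma cardE_splitN (F : {set D}) :
  #|[set e : E | ~~ stF F e]| = (#|[set x : D | ~~ ((x \in F) (+) neg G x)]| * 2)%N.
Proof.
have -> : [set e : E | ~~ stF F e] = setX [set x : D | ~~ ((x \in F) (+) neg G x)] [set: bool].
  by apply/setP => -[x b]; rewrite !inE /stF ffunE andbT.
by rewrite cardsX cardsT card_bool.
Qed.

Lemma state_okE (F : {set D}) : state_ok (stF F) = inv_closed F.
Proof.
apply/forallP/forallP => H x.
  have := H ((x, false) : E); rewrite /stF !ffunE /= neg_einv.
  by case: (neg G x); case: (einv G x \in F); case: (x \in F).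
case: x => x [] /=; rewrite /stF !ffunE //= neg_einv.
case: (boolP (x \in F)) => xF.
  by have := H x; rewrite xF /= => ->.
case: (boolP (einv G x \in F)) => //= exF.
by have := H (einv G x); rewrite exF eiK (negbTE xF).
Qed.

Definition setOf (s : {ffun E -> bool}) : {set D} := [set x | s ((x, true) : E) (+) neg G x].

Local Open Scope ring_scope.
Lemma kb_reindex (C : numFieldType) (A B d : C) :
  kbracket (medial G) A B d =
  \sum_(F : {set D} | inv_closed F) A ^+ alpha (stF F) * B ^+ beta (stF F) * d ^ ((bc F)%:Z - 1).
Proof.
rewrite /kbracket (reindex_onto (@stF G) setOf).
  apply: eq_big => F.
    rewrite state_okE; case Fc: (inv_closed F) => //=.
    by apply/eqP/setP => x; rewrite /setOf inE /stF ffunE /= addbK.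
  by move=> /andP[]; rewrite state_okE => Fc _; rewrite delta_psi // bc_psi.
move=> s /forallP sok; apply/ffunP => -[x b]; rewrite /stF /setOf ffunE inE /= addbK.
case: b => //; by have := sok ((x, true) : E) => /eqP.
Qed.

End Ribbon6.

Section Alg.
Local Open Scope ring_scope.
Variable C : numClosedFieldType.
Variable t : C.
Hypothesis t0 : 0 < t.
Local Notation tau := (sqrtC t).
Local Notation q := (sqrtC (sqrtC t)).
Local Notation d := (- sqrtC t - (sqrtC t)^-1).
Local Notation X := (sqrtC (- t - 1)).
Local Notation Y := (sqrtC (- t^-1 - 1)).

Lemma tau_gt0 : 0 < tau. Proof. by rewrite sqrtC_gt0. Qed.
Lemma q_gt0 : 0 < q. Proof. by rewrite !sqrtC_gt0. Qed.
Lemma q_neq0 : q != 0. Proof. by rewrite gt_eqF // q_gt0. Qed.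
Lemma tau_neq0 : tau != 0. Proof. by rewrite gt_eqF // tau_gt0. Qed.
Lemma t_neq0 : t != 0. Proof. by rewrite gt_eqF. Qed.
Lemma d_neq0 : d != 0.
Proof.
have h : 0 < tau + tau^-1 by rewrite addr_gt0 // ?invr_gt0 tau_gt0.
by rewrite -opprD oppr_eq0 gt_eqF.
Qed.
Lemma tauE : tau = q ^+ 2. Proof. by rewrite sqrtCK. Qed.
Lemma tE : t = tau ^+ 2. Proof. by rewrite sqrtCK. Qed.

Lemma XE : X = tau * Y.
Proof.
rewrite -rootCMl ?ltW //; congr sqrtC.
by rewrite mulrBr mulrN mulfV ?t_neq0 // mulr1 addrC.
Qed.

Lemma Y2 : Y ^+ 2 = d * tau^-1.
Proof.
rewrite sqrtCK; have tn := tau_neq0; have te := tE; move: tn te.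
set u := sqrtC t => tn ->.
by field.
Qed.

Lemma Y_neq0 : Y != 0.
Proof.
apply/negP => /eqP Y0; have := Y2; rewrite Y0 expr0n /= => /esym/eqP.
by rewrite mulf_eq0 invr_eq0 (negbTE d_neq0) (negbTE tau_neq0).
Qed.

Lemma tau_pow (z : int) : tau ^ z = q ^ (2 * z).
Proof. have tE2 : tau = q ^ (2:int) by exact: tauE. by rewrite -exprz_exp -tE2. Qed.

Lemma BR_term (a b g m : int) : a + b = 2 * m ->
  X ^ a * Y ^ b * d^-1 ^ g = q ^ (2 * a - 2 * m) * d ^ (m - g).
Proof.
move=> ab.
have e1 : X ^ a * Y ^ b = tau ^ a * Y ^ (2 * m).
  by rewrite XE expfzMl -mulrA -expfzDr ?Y_neq0 // ab.
have e2 : Y ^ (2 * m) = d ^ m * tau ^ (- m).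
  by rewrite -exprz_exp -[Y ^ (2:int)]/(Y ^+ 2) Y2 expfzMl exprz_inv.
have h1 : 2 * a - 2 * m = 2 * a + 2 * (- m) by lia.
have h2 : m - g = m + (- g) by lia.
rewrite e1 e2 !tau_pow exprz_inv h1 !expfzDr ?q_neq0 ?d_neq0 //.
ring.
Qed.

Lemma combine (al be : nat) (e1 e2 e3 e4 e5 : int) :
  (be%:Z - al%:Z = e2 + e3)%R -> e1 = e4 + e5 ->
  q^-1 ^+ al * q ^+ be * d ^ e1 = q ^ e2 * d ^ e4 * (q ^ e3 * d ^ e5).
Proof.
move=> h1 ->.
rewrite exprVn exprnN exprnP expfzDr ?d_neq0 //.
have -> : q ^ (- al%:Z) * q ^ be = q ^ (e2 + e3).
  by rewrite -expfzDr ?q_neq0 //; congr (q ^ _); lia.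
rewrite expfzDr ?q_neq0 //; ring.
Qed.

End Alg.

Section Counts.
Variable G : sribbon.
Local Notation D := (dart G).
Local Notation ei := (einv G).
Variable F : {set D}.
Hypothesis Fc : inv_closed F.

Local Notation S1 := [set x : D | (x \in F) && ~~ neg G x].
Local Notation S2 := [set x : D | (x \in F) && neg G x].
Local Notation S3 := [set x : D | (x \notin F) && ~~ neg G x].
Local Notation S4 := [set x : D | (x \notin F) && neg G x].

Lemma evenS (b c : bool) :
  ~~ odd #|[set x : D | ((x \in F) == b) && (neg G x == c)]|.
Proof. by apply: even_ei => x; rewrite !inE (eiF Fc) neg_einv. Qed.

Lemma ev1 : ~~ odd #|S1|.
Proof. by have := evenS true false; congr (~~ odd _); apply: eq_card => x; rewrite !inE; case: (x \in F); case: (neg G x). Qed.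
Lemma ev2 : ~~ odd #|S2|.
Proof. by have := evenS true true; congr (~~ odd _); apply: eq_card => x; rewrite !inE; case: (x \in F); case: (neg G x). Qed.
Lemma ev3 : ~~ odd #|S3|.
Proof. by have := evenS false false; congr (~~ odd _); apply: eq_card => x; rewrite !inE; case: (x \in F); case: (neg G x). Qed.
Lemma ev4 : ~~ odd #|S4|.
Proof. by have := evenS false true; congr (~~ odd _); apply: eq_card => x; rewrite !inE; case: (x \in F); case: (neg G x). Qed.

Lemma cA : #|[set x : D | (x \in F) (+) neg G x]| = (#|S1| + #|S4|)%N.
Proof.
rewrite (card_split _ (fun x => x \in F)); congr (_ + _); apply: eq_card => x;
  by rewrite !inE; case: (x \in F); case: (neg G x).
Qed.
Lemma cB : #|[set x : D | ~~ ((x \in F) (+) neg G x)]| = (#|S2| + #|S3|)%N.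
Proof.
rewrite (card_split _ (fun x => x \in F)); congr (_ + _); apply: eq_card => x;
  by rewrite !inE; case: (x \in F); case: (neg G x).
Qed.
Lemma cF : #|F| = (#|S1| + #|S2|)%N.
Proof.
have -> : #|F| = #|[set x : D | x \in F]| by apply: eq_card => x; rewrite inE.
rewrite (card_split _ (neg G)) addnC; congr (_ + _); apply: eq_card => x;
  by rewrite !inE.
Qed.
Lemma cT : #|[set: D]| = (#|S1| + #|S2| + #|S3| + #|S4|)%N.
Proof.
have -> : #|[set: D]| = #|[set x : D | true]| by apply: eq_card => x; rewrite !inE.
have e1 : #|[set x : D | true && (x \in F)]| = (#|S1| + #|S2|)%N.
  by rewrite -cF; apply: eq_card => x; rewrite !inE.
have e2 : #|[set x : D | true && ~~ (x \in F)]| = (#|S3| + #|S4|)%N.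
  rewrite (card_split _ (neg G)) addnC; congr (_ + _); apply: eq_card => x;
  by rewrite !inE.
by rewrite (card_split _ (fun x => x \in F)) e1 e2 !addnA.
Qed.
Lemma cN : #|[set d in F | neg G d]| = #|S2|.
Proof. by apply: eq_card => x; rewrite !inE. Qed.
Lemma cNc : #|[set d in ~: F | neg G d]| = #|S4|.
Proof. by apply: eq_card => x; rewrite !inE. Qed.

Local Open Scope ring_scope.

Lemma exps :
  let al := alpha (stF F) in let be := beta (stF F) in
  let rT := rank [set: D] in let nT := nullity [set: D] in
  let rF := rank F in let nF := nullity F in
  let ts := twice_s F in
  let m := rT - rF + nF in
  let a' := 2 * (rT - rF) + ts in
  be%:Z - al%:Z = (- rT + nT) + (2 * a' - 2 * m).
Proof.
move=> al be rT nT rF nF ts m a'.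
rewrite /al /be /alpha /beta cardE_split cardE_splitN cA cB.
rewrite /m /a' /rT /nT /rF /nF /ts /nullity /rank /twice_s /negs /nedges cNc cF cT.
have := ev1; have := ev2; have := ev3; have := ev4.
move: #|S1| #|S2| #|S3| #|S4| => s1 s2 s3 s4 e4 e3 e2 e1.
have := odd_double_half s1; have := odd_double_half s2;
have := odd_double_half s3; have := odd_double_half s4.
rewrite (negbTE e1) (negbTE e2) (negbTE e3) (negbTE e4) /= !add0n.
move: s1./2 s2./2 s3./2 s4./2 => h1 h2 h3 h4 <- <- <- <-.
rewrite -!muln2.
lia.
Qed.

End Counts.

Unset Implicit Arguments. Set Strict Implicit. Set Printing Implicit Defensive.
Local Open Scope ring_scope.

Theorem corollary4p2 (C : numClosedFieldType) (G : sribbon)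
    (o : dE (medial G) -> bool) (t : C) :
  0 < t -> is_orientation o ->
  let q := sqrtC (sqrtC t) in
  let w := writhe o in
  let d := - sqrtC t - (sqrtC t)^-1 in
  jones o t
    = (-1) ^ w * q ^ (3 * w - rank [set: dart G] + nullity [set: dart G])
      * d ^ ((ncomp [set: dart G])%:Z - 1)
      * BR_eval G (- t - 1) (- t^-1 - 1) d^-1
  /\ (planar G -> (forall x, ~~ neg G x) ->
      jones o t
        = (-1) ^ w * q ^ (3 * w - rank [set: dart G] + nullity [set: dart G])
          * d ^ ((ncomp [set: dart G])%:Z - 1)
          * tutte G (- t) (- t^-1)).
Proof.
move=> t0 _ q w d.
have KB : kbracket (medial G) q^-1 q d =
    q ^ (- rank [set: dart G] + nullity [set: dart G]) * d ^ ((ncomp [set: dart G])%:Z - 1)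
    * BR_eval G (- t - 1) (- t^-1 - 1) d^-1.
  rewrite kb_reindex /BR_eval mulr_sumr; apply: eq_bigr => F Fc.
  rewrite (@BR_term _ _ t0 _ _ _ (rank [set: dart G] - rank F + nullity F)); last by lia.
  apply: combine => //.
    exact: exps.
  rewrite /nullity /rank; lia.
have J : jones o t = (-1) ^ w * q ^ (3 * w) * kbracket (medial G) q^-1 q d by [].
have P1 : jones o t
    = (-1) ^ w * q ^ (3 * w - rank [set: dart G] + nullity [set: dart G])
      * d ^ ((ncomp [set: dart G])%:Z - 1)
      * BR_eval G (- t - 1) (- t^-1 - 1) d^-1.
  rewrite J KB.
  have -> : 3 * w - rank [set: dart G] + nullity [set: dart G] = 3 * w + (- rank [set: dart G] + nullity [set: dart G]) by lia.
  rewrite [q ^ (3 * w + _)](expfzDr _ _ (q_neq0 t0)); ring.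
split => // pl pos.
rewrite P1; congr (_ * _).
rewrite /BR_eval /tutte; apply: eq_bigr => F Fc.
have ts0 : twice_s F = 0.
  rewrite /twice_s /negs.
  have h : forall A : {set dart G}, #|[set d0 in A | neg G d0]| = 0%N.
    by move=> A; apply: eq_card0 => x; rewrite !inE (negbTE (pos x)) andbF.
  by rewrite !h div0n.
have g0 : (ncomp F)%:Z - (bc F)%:Z + nullity F = 0.
  have := genus_planar pl Fc; rewrite /genusF /nullity /rank; lia.
rewrite ts0 g0 addr0 subr0 expr0z mulr1 -!exprz_exp.
by rewrite -[sqrtC (- t - 1) ^ (2:int)]/(sqrtC (- t - 1) ^+ 2)
           -[sqrtC (- t^-1 - 1) ^ (2:int)]/(sqrtC (- t^-1 - 1) ^+ 2) !sqrtCK.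
Qed.
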